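(* Let $S(x)=0$ be an arbitrary smooth closed surface in ${\bf R}^n$. Then there exists a stationary (time-independent) Lorentzian metric on ${\bf R}^n\times{\bf R}$, with inverse tensor $[g^{jk}(x)]_{j,k=0}^n$, such that $S=0$ is an ergosphere of this metric and $\{S(x)=0\}\times{\bf R}$ is an event horizon.
   Context: Coordinates $(x_0,x)$, $x_0$ time, $x\in{\bf R}^n$; the metric has signature $(1,-1,\dots,-1)$ and $g^{00}>0$. The ergosphere is the set where $g_{00}(x)=0$, equivalently where $\det[g^{jk}(x)]_{j,k=1}^n=0$. A closed smooth surface $S_0(x)=0$ gives an event horizon $\{S_0=0\}\times{\bf R}$ if it is characteristic, i.e. $\sum_{j,k=1}^n g^{jk}S_{0x_j}S_{0x_k}=0$ on $S_0=0$, and $\sum_{j=1}^n g^{0j}S_{0x_j}\neq0$ on $S_0=0$ (with $S_{0x}$ the outward normal; the interior is then a black hole if this sum is negative and a white hole if positive). *)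

(* Defs.v *)
From HB Require Import structures.
From mathcomp Require Import all_boot all_order all_algebra.
From mathcomp Require Import all_classical all_reals all_analysis.
Set Implicit Arguments. Unset Strict Implicit. Unset Printing Implicit Defensive.
Import Order.TTheory GRing.Theory Num.Theory.
Import numFieldNormedType.Exports.
Local Open Scope ring_scope.
Local Open Scope classical_set_scope.

(* Points of space R^n are row vectors 'rV[R]_n; spatial index i : 'I_n
   corresponds to the coordinate x_{i+1}.  Space-time indices are 'I_n.+1,
   with ord0 the time index x_0 and (lift ord0 i) the spatial index x_{i+1}. *)

Definition evec (R : realType) (n : nat) (i : 'I_n) : 'rV[R]_n := delta_mx 0 i.

Definition partial (R : realType) (n : nat) (i : 'I_n) (f : 'rV[R]_n -> R)
  : 'rV[R]_n -> R := fun x => 'D_(evec R i) f x.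

Fixpoint dpart (R : realType) (n : nat) (l : seq 'I_n) (f : 'rV[R]_n -> R)
  : 'rV[R]_n -> R :=
  match l with
  | [::] => f
  | i :: l' => partial i (dpart l' f)
  end.

Definition smooth (R : realType) (n : nat) (f : 'rV[R]_n -> R) : Prop :=
  forall (l : seq 'I_n) (x : 'rV[R]_n), differentiable (dpart l f) x.

Definition grad_ne0 (R : realType) (n : nat) (S : 'rV[R]_n -> R) (x : 'rV[R]_n) : Prop :=
  exists i : 'I_n, partial i S x != 0.

Definition smooth_closed_surface (R : realType) (n : nat) (S : 'rV[R]_n -> R) : Prop :=
  [/\ smooth S,
      [set x | S x = 0] !=set0,
      compact [set x | S x = 0] &
      forall x, S x = 0 -> grad_ne0 S x].

Definition minkowski (R : realType) (n : nat) : 'M[R]_n.+1 :=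
  diag_mx (\row_(j < n.+1) (if j == ord0 then 1 else -1)).

(* A stationary Lorentzian metric on R^n x R given by its inverse tensor
   g(x) = [g^{jk}(x)]_{j,k=0}^n: smooth in x, symmetric, of signature
   (1,-1,...,-1) (congruent to diag(1,-1,...,-1)), with g^{00} > 0. *)
Definition stationary_lorentzian_inv (R : realType) (n : nat)
  (g : 'rV[R]_n -> 'M[R]_n.+1) : Prop :=
  [/\ forall j k : 'I_n.+1, smooth (fun x => g x j k),
      forall x, (g x)^T = g x,
      forall x, exists2 P : 'M[R]_n.+1, P \in unitmx & P^T *m g x *m P = minkowski R n &
      forall x, 0 < g x ord0 ord0].

(* The ergosphere: the set where g_{00}(x) = 0, g_{jk} being the
   (covariant) metric, i.e. the inverse matrix of [g^{jk}]. *)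
Definition ergosphere (R : realType) (n : nat) (g : 'rV[R]_n -> 'M[R]_n.+1)
  : set 'rV[R]_n := [set x | (invmx (g x)) ord0 ord0 = 0].

Definition event_horizon (R : realType) (n : nat) (g : 'rV[R]_n -> 'M[R]_n.+1)
  (S : 'rV[R]_n -> R) : Prop :=
  forall x, S x = 0 ->
    (\sum_(j < n) \sum_(k < n)
        g x (lift ord0 j) (lift ord0 k) * partial j S x * partial k S x = 0)
    /\ (\sum_(j < n) g x ord0 (lift ord0 j) * partial j S x != 0).

(* Main.v *)
Require Import Defs.
From HB Require Import structures.
From mathcomp Require Import all_boot all_order all_algebra.
From mathcomp Require Import all_classical all_reals all_analysis.
From mathcomp.algebra_tactics Require Import ring lra.
Set Implicit Arguments. Unset Strict Implicit. Unset Printing Implicit Defensive.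
Import Order.TTheory GRing.Theory Num.Theory.
Import numFieldNormedType.Exports.
Local Open Scope ring_scope.
Local Open Scope classical_set_scope.

Section Sm.
Variables (R : realType) (n : nat).
Implicit Types (f g u v : 'rV[R]_n -> R).

Lemma dpart_rcons (l : seq 'I_n) i f : dpart (rcons l i) f = dpart l (partial i f).
Proof. by elim: l => //= j l ->. Qed.

Definition smoothk k f := forall (l : seq 'I_n) x, (size l <= k)%N -> differentiable (dpart l f) x.

Lemma dpartD k u v (l : seq 'I_n) : smoothk k u -> smoothk k v -> (size l <= k.+1)%N ->
  dpart l (u + v) = dpart l u + dpart l v.
Proof.
move=> su sv; elim: l => //= i l IH hs.
rewrite IH; last by apply: leqW.
apply/funext => x; rewrite /partial deriveD //; apply: diff_derivable.
  exact: su.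
exact: sv.
Qed.

Lemma partialM i f g x : differentiable f x -> differentiable g x ->
  partial i (f * g) x = (partial i f * g + f * partial i g) x.
Proof.
move=> df dg; rewrite /partial deriveM; try exact: diff_derivable.
by rewrite /=; rewrite [RHS]addrC; congr (_ + _); rewrite mulrC //.
Qed.

Lemma smoothW f : smooth f -> forall k, smoothk k f.
Proof. by move=> sf k l x _; exact: sf. Qed.

Lemma smooth_partial i f : smooth f -> smooth (partial i f).
Proof. by move=> sf l x; rewrite -dpart_rcons; exact: sf. Qed.

Lemma smoothkP f : (forall k, smoothk k f) -> smooth f.
Proof. by move=> h l x; exact: (h (size l)). Qed.

Lemma smooth_add u v : smooth u -> smooth v -> smooth (u + v).
Proof.
move=> su sv l x; rewrite (@dpartD (size l)) //; try exact: smoothW.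
apply: differentiableD; [exact: su | exact: sv].
Qed.

Lemma smooth_mul f g : smooth f -> smooth g -> smooth (f * g).
Proof.
move=> sf sg; apply: smoothkP => k; elim: k f g sf sg => [|k IH] f g sf sg l x.
  case: l => //= _; apply: differentiableM; [exact: (sf [::]) | exact: (sg [::])].
case/lastP: l => [|l i] hs.
  apply: differentiableM; [exact: (sf [::]) | exact: (sg [::])].
rewrite size_rcons ltnS in hs.
rewrite dpart_rcons.
have -> : partial i (f * g) = partial i f * g + f * partial i g.
  apply/funext => y; apply: partialM; [exact: (sf [::]) | exact: (sg [::])].
have s1 := IH _ _ (smooth_partial i sf) sg.
have s2 := IH _ _ sf (smooth_partial i sg).
rewrite (@dpartD k) //; last by apply: leqW.
apply: differentiableD; [exact: s1 | exact: s2].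
Qed.

Lemma smooth_cst (a : R) : smooth (cst a : 'rV[R]_n -> R).
Proof.
move=> l x; suff [c ->] : exists c, dpart l (cst a) = cst c.
  exact: differentiable_cst.
elim: l => [|i l [c IH]] /=; first by exists a.
by exists 0; rewrite IH; apply/funext => y; rewrite /partial derive_cst.
Qed.

Lemma smooth_ext f g : (forall x, f x = g x) -> smooth f -> smooth g.
Proof. by move=> e; have -> : f = g by apply/funext. Qed.

Lemma smooth_sum (m : nat) (F : 'I_m -> 'rV[R]_n -> R) :
  (forall i, smooth (F i)) -> smooth (fun x => \sum_(i < m) F i x).
Proof.
elim: m F => [|m IH] F hF.
  apply: (@smooth_ext (cst 0)); last exact: smooth_cst.
  by move=> x; rewrite big_ord0.
apply: (@smooth_ext ((fun x => \sum_(i < m) F (widen_ord (leqnSn m) i) x) + F ord_max)).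
  by move=> x; rewrite big_ord_recr.
apply: smooth_add; last exact: hF.
by apply: IH => i; apply: hF.
Qed.

End Sm.

Lemma smooth_addf (R : realType) (n : nat) (u v : 'rV[R]_n -> R) :
  smooth u -> smooth v -> smooth (fun x => u x + v x).
Proof. exact: smooth_add. Qed.
Lemma smooth_mulf (R : realType) (n : nat) (u v : 'rV[R]_n -> R) :
  smooth u -> smooth v -> smooth (fun x => u x * v x).
Proof. exact: smooth_mul. Qed.

Section Cons.
Variables (R : realType) (n : nat) (S : 'rV[R]_n -> R).

Definition cc x (j : 'I_n.+1) : R := oapp (fun i => partial i S x) 1 (unlift ord0 j).
Definition b2 x : R := \sum_(i < n) partial i S x ^+ 2 + S x ^+ 2.
Definition bt x : R := Num.sqrt (b2 x).
Definition QQ x : 'M[R]_n.+1 :=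
  \matrix_(j, k) (if k == ord0 then cc x j else if j == k then bt x else 0).
Definition QI x : 'M[R]_n.+1 :=
  \matrix_(j, k) (if k == ord0 then (if j == ord0 then 1 else - cc x j / bt x)
                  else if j == k then (bt x)^-1 else 0).
Definition gg x : 'M[R]_n.+1 := QQ x *m Defs.minkowski R n *m (QQ x)^T.

Lemma cc0 x : cc x ord0 = 1.
Proof. by rewrite /cc unlift_none. Qed.
Lemma ccl x i : cc x (lift ord0 i) = partial i S x.
Proof. by rewrite /cc liftK. Qed.

Lemma b2_ge0 x : 0 <= b2 x.
Proof. by rewrite /b2 addr_ge0 ?sqr_ge0 ?sumr_ge0 // => i _; rewrite sqr_ge0. Qed.

Lemma mink_diag (i : 'I_n.+1) : Defs.minkowski R n i i = if i == ord0 then 1 else -1.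
Proof. by rewrite /Defs.minkowski mxE eqxx mulr1n mxE. Qed.

Lemma lneq0 (i : 'I_n) : (lift ord0 i == ord0 :> 'I_n.+1) = false.
Proof. by apply/negbTE; rewrite eq_sym neq_lift. Qed.
Lemma neq0l (i : 'I_n) : (ord0 == lift ord0 i :> 'I_n.+1) = false.
Proof. by apply/negbTE; rewrite neq_lift. Qed.
Lemma lleq (i j : 'I_n) : (lift ord0 i == lift ord0 j :> 'I_n.+1) = (i == j).
Proof. exact: (inj_eq lift_inj). Qed.

Lemma QQ0 x j : QQ x j ord0 = cc x j.
Proof. by rewrite mxE eqxx. Qed.
Lemma QQl x j i : QQ x j (lift ord0 i) = if j == lift ord0 i then bt x else 0.
Proof. by rewrite mxE lneq0. Qed.

Lemma gg_entry x j k :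
  gg x j k = cc x j * cc x k - b2 x * ((j != ord0) && (j == k))%:R.
Proof.
rewrite /gg /Defs.minkowski mul_mx_diag !mxE big_ord_recl !mxE eqxx /=.
rewrite mulr1.
under eq_bigr => i _ do rewrite !mxE lneq0.
case: (unliftP ord0 j) => [j'|] ->.
- rewrite (bigD1 j') //= big1 ?addr0; last first.
    by move=> i /negbTE ne; rewrite lleq eq_sym ne !mul0r.
  rewrite eqxx.
  case: (unliftP ord0 k) => [k'|] ->.
  + rewrite !lleq.
    case: (eqVneq j' k') => [<-|ne].
      by rewrite mulr1 mulrN1 mulNr -(expr2 (bt x)) /bt sqr_sqrtr ?b2_ge0.
    by rewrite !mulr0 addr0 subr0.
  + by rewrite neq0l lneq0 !mulr0 addr0 subr0.
- rewrite eqxx /= mulr0 subr0 big1 ?addr0 //.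
  by move=> i _; rewrite !mul0r.
Qed.

Lemma b2_gt0 : (forall x, S x = 0 -> grad_ne0 S x) -> forall x, 0 < b2 x.
Proof.
move=> hg x; rewrite /b2.
have h0 : 0 <= \sum_(i < n) partial i S x ^+ 2 by rewrite sumr_ge0 // => i _; rewrite sqr_ge0.
have hs := sqr_ge0 (S x).
case: (eqVneq (S x) 0) => [/hg [i hi]|hS].
  rewrite (bigD1 i) //=.
  have h1 : 0 <= \sum_(j < n | j != i) partial j S x ^+ 2 by rewrite sumr_ge0 // => j _; rewrite sqr_ge0.
  have h2 : 0 < partial i S x ^+ 2 by rewrite exprn_even_gt0.
  lra.
have h2 : 0 < S x ^+ 2 by rewrite exprn_even_gt0.
lra.
Qed.

Lemma QQ_QI (hg : forall x, S x = 0 -> grad_ne0 S x) x : QQ x *m QI x = 1%:M.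
Proof.
have bt0 : bt x != 0 by rewrite /bt sqrtr_eq0 -ltNge b2_gt0.
apply/matrixP => j k; rewrite !mxE big_ord_recl !mxE eqxx.
under eq_bigr => i _ do rewrite !mxE lneq0.
case: (unliftP ord0 j) => [j'|] ->.
- rewrite (bigD1 j') //= big1 ?addr0; last first.
    by move=> i /negbTE ne; rewrite lleq eq_sym ne !mul0r.
  case: (unliftP ord0 k) => [k'|] ->.
  + rewrite !lleq lneq0 neq0l.
    rewrite eqxx.
    by case: (j' == k'); rewrite /= ?mulr0 ?add0r ?addr0 ?divff.
  + by rewrite !eqxx lneq0 /=; field.
- rewrite big1 ?addr0; last by move=> i _; rewrite neq0l !mul0r.
  rewrite cc0 mul1r.
  case: (unliftP ord0 k) => [k'|] ->; first by rewrite lneq0 neq0l.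
  by rewrite eqxx.
Qed.

Lemma mink_sq : Defs.minkowski R n *m Defs.minkowski R n = 1%:M.
Proof.
apply/matrixP => i j; rewrite /Defs.minkowski mul_diag_mx !mxE.
case: (eqVneq i j) => [->|ne]; last by rewrite mulr0n mulr0.
by case: ifP => _; rewrite mulr1n ?mulr1 ?mulrNN ?mulr1.
Qed.

Definition HH x := (QI x)^T *m Defs.minkowski R n *m QI x.

Lemma gg_HH (hg : forall x, S x = 0 -> grad_ne0 S x) x : gg x *m HH x = 1%:M.
Proof.
have h1 := QQ_QI hg x.
have h2 := mulmx1C h1.
rewrite /gg /HH !mulmxA -[QQ x *m _ *m _ *m _]mulmxA -trmx_mul h2 trmx1 mulmx1.
by rewrite -[QQ x *m _ *m _]mulmxA mink_sq mulmx1.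
Qed.

Lemma invgg (hg : forall x, S x = 0 -> grad_ne0 S x) x : invmx (gg x) = HH x.
Proof.
have h := gg_HH hg x.
have [u _] := mulmx1_unit h.
by rewrite -[invmx _]mulmx1 -h mulmxA mulVmx // mul1mx.
Qed.

Lemma HH00 (hg : forall x, S x = 0 -> grad_ne0 S x) x : HH x ord0 ord0 * b2 x = S x ^+ 2.
Proof.
have b0 := b2_gt0 hg x.
have bt0 : bt x != 0 by rewrite /bt sqrtr_eq0 -ltNge.
rewrite /HH /Defs.minkowski mul_mx_diag !mxE big_ord_recl !mxE !eqxx /=.
under eq_bigr => i _ do rewrite !mxE lneq0 ccl.
rewrite mulr1 mul1r.
have -> : \sum_(i < n) - partial i S x / bt x * -1 * (- partial i S x / bt x)
   = - (\sum_(i < n) partial i S x ^+ 2) / b2 x.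
  rewrite mulNr mulr_suml -sumrN; apply: eq_bigr => i _.
  have e : b2 x = bt x ^+ 2 by rewrite /bt sqr_sqrtr // ltW.
  by rewrite e; field.
rewrite mulrDl mul1r mulfVK ?gt_eqF // /b2; ring.
Qed.
End Cons.

Theorem proposition2p5 (R : realType) (n : nat) (S : 'rV[R]_n -> R) :
  smooth_closed_surface S ->
  exists g : 'rV[R]_n -> 'M[R]_n.+1,
    [/\ stationary_lorentzian_inv g,
        ergosphere g = [set x | S x = 0] &
        event_horizon g S].
Proof.
case=> sS _ _ hg.
have scc : forall j, smooth (fun x => cc S x j).
  move=> j; case: (unliftP ord0 j) => [j'|] ->.
    apply: (@smooth_ext _ _ (partial j' S)); first by move=> x; rewrite ccl.
    exact: smooth_partial.
  apply: (@smooth_ext _ _ (cst 1)); first by move=> x; rewrite cc0.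
  exact: smooth_cst.
have sb2 : smooth (b2 S).
  apply: (@smooth_ext _ _ (fun x => \sum_(i < n) (partial i S x * partial i S x) + S x * S x)).
    move=> x; rewrite /b2 expr2; congr (_ + _).
  apply: smooth_addf; last exact: smooth_mulf.
  by apply: (smooth_sum (F := fun i x => partial i S x * partial i S x)) => i; apply: smooth_mulf; apply: smooth_partial.
exists (gg S); split; first split.
- move=> j k.
  apply: (@smooth_ext _ _ (fun x => cc S x j * cc S x k
            + (fun _ => - ((j != ord0) && (j == k))%:R) x * b2 S x)).
    by move=> x; rewrite gg_entry; ring.
  apply: smooth_addf; apply: smooth_mulf => //; exact: smooth_cst.
- move=> x; rewrite /gg !trmx_mul trmxK tr_diag_mx mulmxA //.
- move=> x; exists (QI S x)^T.
    by rewrite unitmx_tr; case: (mulmx1_unit (QQ_QI hg x)).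
  have h := mulmx1C (QQ_QI hg x).
  rewrite trmxK /gg !mulmxA h mul1mx -!mulmxA -trmx_mul h trmx1 mulmx1 //.
- by move=> x; rewrite gg_entry cc0 eqxx /= mulr0 subr0 mulr1.
- rewrite /ergosphere; apply/seteqP; split => x /=; rewrite invgg //; have := HH00 hg x.
    by move=> + h0; rewrite h0 mul0r => /esym /eqP; rewrite sqrf_eq0 => /eqP.
  move=> + hS; rewrite hS expr0n /= => /eqP; rewrite mulf_eq0 => /orP [/eqP //|].
  by rewrite gt_eqF // b2_gt0.
- move=> x hS; split.
    apply: big1 => j _.
    under eq_bigr => k _ do rewrite gg_entry !ccl lneq0 lleq /=.
    have e : b2 S x = \sum_(i < n) partial i S x ^+ 2 by rewrite /b2 hS expr0n addr0.
    rewrite e; set T := \sum_(i < n) partial i S x ^+ 2.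
    under eq_bigr => k _ do rewrite !mulrBl.
    have h2 : \sum_(k < n) T * (j == k)%:R * partial j S x * partial k S x = T * partial j S x ^+ 2.
      rewrite (bigD1 j) //= eqxx big1 ?addr0 => [|k nk]; first by rewrite mulr1; ring.
      by rewrite (eq_sym j) (negbTE nk) mulr0 !mul0r.
    have h1 : \sum_(k < n) partial j S x * partial k S x * partial j S x * partial k S x
        = partial j S x ^+ 2 * T.
      by rewrite /T mulr_sumr; apply: eq_bigr => k _; ring.
    by rewrite sumrB h1 h2; ring.
  under eq_bigr => j _ do rewrite gg_entry cc0 ccl eqxx /= mulr0 subr0 mul1r -expr2.
  have [i hi] := hg x hS.
  rewrite (bigD1 i) //=.
  have h1 : 0 <= \sum_(j < n | j != i) partial j S x ^+ 2 by rewrite sumr_ge0 // => j _; rewrite sqr_ge0.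
  have h2 : 0 < partial i S x ^+ 2 by rewrite exprn_even_gt0.
  rewrite gt_eqF //; lra.
Qed.
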